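(* For every $n\ge1$ and $b\in\mathbb{Z}$ there exists a checking algorithm for the function $f_b(x)=bx$ over the domain $D_n$ that makes a constant number of queries to the program $P_b$ and uses $O(n)$ additional computation time.
   Context: $D_n=\{0,1,\dots,2^n-1\}$. A program $P_b$ is modeled as an arbitrary function $P_b:\{0,1,\dots,2^n\}\to\mathbb{Z}$ that may be queried at any point. A checking algorithm for $f$ is a randomized algorithm $C$ that receives an input $x$ and query access to a program $P$ and outputs PASS or FAIL such that: if $P=f$ on all inputs, $C$ outputs PASS with probability at least $2/3$; if $P(x)\ne f(x)$ at the given $x$, $C$ outputs FAIL with probability at least $2/3$ (probabilities over the coin tosses of $C$ only). Additional computation time means running time excluding time spent by $P$ answering queries; additions, comparisons and shifts by $n$ positions count as linear-time operations. *)

(* Defs.v *)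
From HB Require Import structures.
From mathcomp Require Import all_boot all_order all_algebra.
Set Implicit Arguments. Unset Strict Implicit. Unset Printing Implicit Defensive.
Import Order.TTheory GRing.Theory Num.Theory.
Local Open Scope ring_scope.

(* Checker programs: loop-free register programs over integer registers
   (indexed by nat).  Register 0 initially holds the input x, all other
   registers hold 0.  Instructions:
     CConst d c k   : r_d := c
     CAdd d a b k   : r_d := r_a + r_b
     CSub d a b k   : r_d := r_a - r_b
     CShl d a k     : r_d := r_a * 2^n        (shift left by n positions)
     CShr d a k     : r_d := floor (r_a / 2^n) (shift right by n positions)
     CIfLe a b k1 k2: if r_a <= r_b then k1 else k2   (comparison)
     CRand d k      : r_d := uniformly random element of D_n = {0..2^n-1}
     CQuery d a k   : r_d := P (r_a)           (query to the program)
     CHalt pass     : output PASS (true) or FAIL (false). *)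
Inductive prog : Type :=
| CHalt of bool
| CConst of nat & int & prog
| CAdd of nat & nat & nat & prog
| CSub of nat & nat & nat & prog
| CShl of nat & nat & prog
| CShr of nat & nat & prog
| CIfLe of nat & nat & prog & prog
| CRand of nat & prog
| CQuery of nat & nat & prog.

Definition upd (r : nat -> int) (d : nat) (v : int) : nat -> int :=
  fun i => if i == d then v else r i.

Definition init_regs (x : int) : nat -> int := fun i => if i == 0%N then x else 0.

Fixpoint pass_prob (n : nat) (P : int -> int) (p : prog) (r : nat -> int) : rat :=
  match p with
  | CHalt b => if b then 1 else 0
  | CConst d c k => pass_prob n P k (upd r d c)
  | CAdd d a b k => pass_prob n P k (upd r d (r a + r b))
  | CSub d a b k => pass_prob n P k (upd r d (r a - r b))
  | CShl d a k => pass_prob n P k (upd r d (r a * (2 ^ n)%:Z))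
  | CShr d a k => pass_prob n P k (upd r d (r a %/ (2 ^ n)%:Z)%Z)
  | CIfLe a b k1 k2 => if r a <= r b then pass_prob n P k1 r else pass_prob n P k2 r
  | CRand d k =>
      (\sum_(v < 2 ^ n) pass_prob n P k (upd r d (nat_of_ord v)%:Z)) / (2 ^ n)%:R
  | CQuery d a k => pass_prob n P k (upd r d (P (r a)))
  end.

(* worst-case additional computation time: every non-query operation
   (addition, subtraction, comparison, shift by n positions, loading a
   constant, drawing a random element of D_n) is a linear-time operation
   and costs n; queries cost nothing (time spent by P is excluded). *)
Fixpoint comp_time (n : nat) (p : prog) : nat :=
  match p with
  | CHalt _ => 0
  | CConst _ _ k | CAdd _ _ _ k | CSub _ _ _ k | CShl _ _ k | CShr _ _ k
  | CRand _ k => n + comp_time n k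
  | CIfLe _ _ k1 k2 => n + maxn (comp_time n k1) (comp_time n k2)
  | CQuery _ _ k => comp_time n k
  end.

Fixpoint num_queries (p : prog) : nat :=
  match p with
  | CHalt _ => 0
  | CConst _ _ k | CAdd _ _ _ k | CSub _ _ _ k | CShl _ _ k | CShr _ _ k
  | CRand _ k => num_queries k
  | CIfLe _ _ k1 k2 => maxn (num_queries k1) (num_queries k2)
  | CQuery _ _ k => (num_queries k).+1
  end.

(* C is a checking algorithm for f over D_n (programs have domain {0..2^n}) *)
Definition is_checker (n : nat) (f : int -> int) (C : prog) : Prop :=
  forall x : int, 0 <= x < (2 ^ n)%:Z ->
    (forall P : int -> int,
        (forall y : int, 0 <= y <= (2 ^ n)%:Z -> P y = f y) ->
        2%:R / 3%:R <= pass_prob n P C (init_regs x)) /\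
    (forall P : int -> int, P x <> f x ->
        2%:R / 3%:R <= 1 - pass_prob n P C (init_regs x)).

(* Main.v *)
Require Import Defs.
From HB Require Import structures.
From mathcomp Require Import all_boot all_order all_algebra.
From mathcomp Require Import zify ring lra.
Set Implicit Arguments. Unset Strict Implicit. Unset Printing Implicit Defensive.
Import Order.TTheory GRing.Theory Num.Theory.
Local Open Scope ring_scope.

Section BLR.
Variable m : nat.
Hypothesis m_gt0 : (0 < m)%N.
Local Notation G := 'I_m.+1.
Variable e : G -> int.

Definition Lin (v w : G) : bool := e v + e w == e (v + w).
Definition Fc : nat := (\sum_(v : G) \sum_(w : G) (~~ Lin v w : nat))%N.
Definition Dd (z r : G) : int := e (z + r) - e r.
Definition bad (z : G) (v : int) : nat := (\sum_(r : G) (Dd z r != v : nat))%N.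

Lemma sum_shift (z : G) (F : G -> nat) :
  (\sum_(r : G) F (z + r)%R = \sum_(r : G) F r)%N.
Proof. by rewrite [RHS](reindex_inj (addrI z)). Qed.

Lemma agree_count z :
  (\sum_(r : G) \sum_(s : G) (Dd z r != Dd z s : nat) <= 2 * Fc)%N.
Proof.
apply: (@leq_trans (\sum_(r : G) \sum_(s : G)
   ((~~ Lin (z + r)%R s : nat) + (~~ Lin (z + s)%R r : nat)))%N).
  apply: leq_sum => r _; apply: leq_sum => s _.
  case: (boolP (Dd z r != Dd z s)) => // hne.
  case: (boolP (Lin (z + r) s)) => /= h1; last by [].
  case: (boolP (Lin (z + s) r)) => /= h2; last by rewrite addn1.
  exfalso; move: hne; rewrite /Dd.
  move: h1 h2; rewrite /Lin => /eqP h1 /eqP h2.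
  rewrite (_ : z + s + r = z + r + s) in h2; last by rewrite -!addrA (addrC s).
  move=> /negP; apply; apply/eqP; lia.
rewrite (eq_bigr (fun r => \sum_(s : G) (~~ Lin (z + r)%R s : nat) +
   \sum_(s : G) (~~ Lin (z + s)%R r : nat))%N); last by move=> r _; rewrite big_split.
rewrite big_split /= mul2n -addnn; apply: leq_add.
  by rewrite (sum_shift z (fun r => \sum_(s : G) (~~ Lin r s : nat))%N).
rewrite exchange_big /=.
by rewrite (sum_shift z (fun s => \sum_(r : G) (~~ Lin s r : nat))%N).
Qed.

Lemma major z : exists v : int, (m.+1 * bad z v <= 2 * Fc)%N.
Proof.
have H := agree_count z.
have [r0 Hr0] : exists r0 : G,
   (m.+1 * \sum_(s : G) (Dd z r0 != Dd z s : nat) <= 2 * Fc)%N.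
  case: (boolP [exists r0 : G,
   (m.+1 * \sum_(s : G) (Dd z r0 != Dd z s : nat) <= 2 * Fc)%N]) => [/existsP //|/existsPn Hall].
  have : (\sum_(r : G) (2 * Fc).+1 <= \sum_(r : G) (m.+1 *
          \sum_(s : G) (Dd z r != Dd z s : nat)))%N.
    by apply: leq_sum => r _; rewrite ltnNge Hall.
  rewrite -big_distrr /= sum_nat_const card_ord => Hle.
  have := leq_mul (leqnn m.+1) H.
  move: Hle; rewrite /= => Hle H2.
  have := leq_trans Hle H2. lia.
exists (Dd z r0); rewrite /bad.
suff -> : (\sum_(r : G) (Dd z r != Dd z r0 : nat) =
          \sum_(s : G) (Dd z r0 != Dd z s : nat))%N by [].
by apply: eq_bigr => r _; rewrite eq_sym.
Qed.

Hypothesis smallF : (6 * Fc < m.+1 * m.+1)%N.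

Definition g (z : G) : int := xchoose (major z).

Lemma bad_g z : (3 * bad z (g z) < m.+1)%N.
Proof.
have := xchooseP (major z); rewrite -/(g z) => H.
have : (3 * (m.+1 * bad z (g z)) < m.+1 * m.+1)%N.
  by apply: leq_ltn_trans smallF; lia.
move=> H2; rewrite mulnA (mulnC 3) -mulnA ltn_pmul2l // in H2.
Qed.

Lemma g_add z w : g z + g w = g (z + w).
Proof.
have h1 := bad_g z; have h2 := bad_g w; have h3 := bad_g (z + w).
have [r Hr] : exists r : G, [&& Dd z (w + r) == g z, Dd w r == g w &
                                Dd (z + w) r == g (z + w)].
  case: (boolP [exists r : G, [&& Dd z (w + r) == g z, Dd w r == g w &
                                Dd (z + w) r == g (z + w)]]) => [/existsP //|/existsPn Hall].
  have : (\sum_(r : G) 1 <= \sum_(r : G)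
     ((Dd z (w + r)%R != g z : nat) + (Dd w r != g w : nat)
      + (Dd (z + w)%R r != g (z + w)%R : nat)))%N.
    apply: leq_sum => r _; have := Hall r.
    by case: (Dd z (w + r) == g z); case: (Dd w r == g w);
       case: (Dd (z + w) r == g (z + w)).
  rewrite !big_split /= sum_nat_const card_ord muln1.
  rewrite (sum_shift w (fun r => (Dd z r != g z : nat))).
  rewrite -/(bad z (g z)) -/(bad w (g w)) -/(bad (z + w) (g (z + w))).
  lia.
case/and3P: Hr => /eqP <- /eqP <- /eqP <-; by rewrite /Dd addrA subrK addrA.
Qed.

Lemma g_zero z : g z = 0.
Proof.
pose one : G := inZp 1.
have g0 : g 0 = 0.
  by have := g_add 0 0; rewrite addr0 => /eqP; rewrite -subr_eq0 addrK => /eqP.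
have gn : forall k, g (one *+ k) = g one *+ k.
  elim=> [|k IH]; first by rewrite !mulr0n.
  by rewrite !mulrS -g_add IH.
have g1 : g one = 0.
  have : g (one *+ m.+1) = 0.
    rewrite -g0; congr g; apply/val_inj; rewrite Zp_mulrn /=.
    by rewrite modnMl.
  by rewrite gn => /eqP; rewrite mulrn_eq0 /= => /eqP.
have -> : z = one *+ z.
  apply/val_inj; rewrite Zp_mulrn /= (modn_small (m := 1)) ?ltnS //.
  by rewrite mul1n modn_small.
by rewrite gn g1 mul0rn.
Qed.

Lemma selfcorr_bound x : e x != 0 ->
  (3 * \sum_(t : G) ((e x + e t == e (x + t))%R : nat) < m.+1)%N.
Proof.
move=> hx; apply: leq_ltn_trans (bad_g x).
rewrite leq_mul2l /= g_zero; apply: leq_sum => t _.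
case: (boolP (e x + e t == e (x + t))) => // /eqP h.
rewrite /Dd -h; apply/negP => /eqP h2; move: hx; rewrite (_ : e x = 0) //; lia.
Qed.

End BLR.

Section Prog.
Variable n : nat.
Variable b : int.
Local Notation N := (2 ^ n)%N.
Local Notation Nz := ((2 ^ n)%N%:Z).

Definition tailp (a c : nat) (w : int) (k : prog) : prog :=
  CQuery 5 a (CQuery 6 c (CQuery 7 3 (CConst 9 w (CAdd 7 7 9 (CAdd 8 5 6
    (CIfLe 8 7 (CIfLe 7 8 k (CHalt false)) (CHalt false))))))).

Definition core (a c : nat) (k : prog) : prog :=
  CAdd 3 a c (CConst 4 (Nz - 1) (CIfLe 3 4 (tailp a c 0 k)
    (CConst 4 Nz (CSub 3 3 4 (tailp a c (b * Nz) k))))).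

Definition testb (P : int -> int) (va vc : nat) : bool :=
  P va%:Z + P vc%:Z == P ((va + vc) %% N)%N%:Z + (if (va + vc < N)%N then 0 else b * Nz).

Lemma core_eq (P : int -> int) (a c : nat) (k : prog) (V : rat) (reg : nat -> int)
   (va vc : nat) :
  (a < 3)%N -> (c < 3)%N -> (va < N)%N -> (vc < N)%N ->
  reg a = va%:Z -> reg c = vc%:Z ->
  (forall r, r 0%N = reg 0%N -> pass_prob n P k r = V) ->
  pass_prob n P (core a c k) reg = if testb P va vc then V else 0.
Proof.
move=> ha hc hva hvc ra rc Hk.
have ne : forall d, (2 < d)%N -> (a == d) = false /\ (c == d) = false.
  by move=> d hd; split; apply/negbTE; rewrite neq_ltn; apply/orP; left; lia.
have [a3 c3] := ne 3%N erefl; have [a4 c4] := ne 4%N erefl.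
have [a5 c5] := ne 5%N erefl; have [a6 c6] := ne 6%N erefl.
have [a7 c7] := ne 7%N erefl; have [a8 c8] := ne 8%N erefl.
have [a9 c9] := ne 9%N erefl.
rewrite /core /tailp /=.
rewrite /upd /= ?a3 ?c3 ?a4 ?c4 ?a5 ?c5 ?a6 ?c6 ?a7 ?c7 ?a8 ?c8 ?a9 ?c9 ra rc.
rewrite !Hk //.
rewrite /testb.
have hdec : forall u w : int, (if u <= w then if w <= u then V else 0 else 0)
   = (if u == w then V else 0).
  move=> u w; case: eqP => [->|hne]; first by rewrite lexx.
  case: (lerP u w) => h1 //; case: (lerP w u) => h2 //.
  by exfalso; apply: hne; apply/le_anti; rewrite h1 h2.
rewrite !hdec.
case: (ltnP (va + vc) N) => hs.
  have -> : ((va%:Z + vc%:Z <= Nz - 1) = true) by apply/idP; lia.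
  by rewrite modn_small.
have -> : ((va%:Z + vc%:Z <= Nz - 1) = false) by apply/negbTE; rewrite -ltNge; lia.
have hm : ((va + vc) %% N = va + vc - N)%N.
  by rewrite -{1}(subnK hs) modnDr modn_small //; lia.
rewrite hm (_ : va%:Z + vc%:Z - Nz = (va + vc - N)%N%:Z) //.
lia.
Qed.

Lemma pp_rand P d k r : pass_prob n P (CRand d k) r =
  (\sum_(v < N) pass_prob n P k (upd r d (nat_of_ord v)%:Z)) / N%:R.
Proof. by []. Qed.
Definition lin (k : prog) : prog := CRand 1 (CRand 2 (core 1 2 k)).
Definition scp (k : prog) : prog := CRand 2 (core 0 2 k).
Definition chk : prog := iter 7 lin (scp (CHalt true)).

Definition rhoL (P : int -> int) : rat :=
  (\sum_(v < N) ((\sum_(w < N) (testb P v w)%:R) / N%:R)) / N%:R.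
Definition rhoS (P : int -> int) (x : nat) : rat :=
  (\sum_(w < N) (testb P x w)%:R) / N%:R.

Lemma if_mul (c : bool) (V : rat) : (if c then V else 0) = c%:R * V.
Proof. by case: c; rewrite ?mul1r ?mul0r. Qed.

Lemma lin_eq P k V reg :
  (forall r, r 0%N = reg 0%N -> pass_prob n P k r = V) ->
  pass_prob n P (lin k) reg = rhoL P * V.
Proof.
move=> Hk; rewrite /lin pp_rand /rhoL mulrAC; congr (_ / _).
rewrite mulr_suml; apply: eq_bigr => v _.
rewrite pp_rand mulrAC; congr (_ / _); rewrite mulr_suml; apply: eq_bigr => w _.
rewrite (@core_eq P 1 2 k V _ v w) ?if_mul //.

Qed.

Lemma scp_eq P k V reg (x : nat) :
  (x < N)%N -> reg 0%N = x%:Z ->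
  (forall r, r 0%N = reg 0%N -> pass_prob n P k r = V) ->
  pass_prob n P (scp k) reg = rhoS P x * V.
Proof.
move=> hx rx Hk; rewrite /scp pp_rand /rhoS mulrAC; congr (_ / _).
rewrite mulr_suml; apply: eq_bigr => w _.
rewrite (@core_eq P 0 2 k V _ x w) ?if_mul //.

Qed.

Lemma chk_eq P (x : nat) : (x < N)%N ->
  pass_prob n P chk (init_regs x%:Z) = rhoL P ^+ 7 * rhoS P x.
Proof.
move=> hx; rewrite /chk.
suff H : forall j reg, reg 0%N = x%:Z ->
    pass_prob n P (iter j lin (scp (CHalt true))) reg = rhoL P ^+ j * rhoS P x.
  by apply: H.
elim=> [|j IH] reg hr.
  change (iter 0 lin (scp (CHalt true))) with (scp (CHalt true)).
  by rewrite expr0 mul1r (@scp_eq P _ 1 reg x) ?mulr1.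
rewrite iterS (@lin_eq P _ (rhoL P ^+ j * rhoS P x)).
  by rewrite exprS mulrA.
by move=> r hr0; rewrite IH // hr0 hr.
Qed.


Lemma ct_core a c k : comp_time n (core a c k) = (10 * n + comp_time n k)%N.
Proof. rewrite /core /tailp /=; rewrite !maxn0; lia. Qed.
Lemma nq_core a c k : num_queries (core a c k) = (3 + num_queries k)%N.
Proof. rewrite /core /tailp /=; rewrite !maxn0; lia. Qed.

Lemma ct_rand d k : comp_time n (CRand d k) = (n + comp_time n k)%N.
Proof. by []. Qed.
Lemma nq_rand d k : num_queries (CRand d k) = num_queries k.
Proof. by []. Qed.

Lemma ct_chk : comp_time n chk = (95 * n)%N.
Proof.
rewrite /chk.
suff H : forall j, comp_time n (iter j lin (scp (CHalt true))) = (12 * j * n + 11 * n)%N.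
  by rewrite H; lia.
elim=> [|j IH].
  change (iter 0 lin (scp (CHalt true))) with (scp (CHalt true)).
  rewrite /scp ct_rand ct_core /=; lia.
rewrite iterS /lin !ct_rand ct_core IH; lia.
Qed.

Lemma nq_chk : num_queries chk = 24%N.
Proof.
rewrite /chk.
suff H : forall j, num_queries (iter j lin (scp (CHalt true))) = (3 * j + 3)%N.
  by rewrite H.
elim=> [|j IH].
  change (iter 0 lin (scp (CHalt true))) with (scp (CHalt true)).
  by rewrite /scp nq_rand nq_core.
rewrite iterS /lin !nq_rand nq_core IH; lia.
Qed.

Lemma testb_good P (va vc : nat) : (va < N)%N -> (vc < N)%N ->
  (forall y : int, 0 <= y <= Nz -> P y = b * y) -> testb P va vc.
Proof.
move=> hva hvc HP; rewrite /testb.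
have hs : ((va + vc) %% N < N)%N by rewrite ltn_mod expn_gt0.
rewrite !HP; try (apply/andP; split; lia).
case: (ltnP (va + vc) N) => h.
  rewrite modn_small // addr0; apply/eqP; lia.
have hm : ((va + vc) %% N = va + vc - N)%N.
  by rewrite -{1}(subnK h) modnDr modn_small //; lia.
rewrite hm; apply/eqP.
rewrite -!mulrDr; congr (_ * _); lia.
Qed.

Lemma sum_one : \sum_(v < N) (1 : rat) = N%:R.
Proof. by rewrite sumr_const card_ord. Qed.

Lemma complete P (x : nat) : (x < N)%N ->
  (forall y : int, 0 <= y <= Nz -> P y = b * y) -> rhoL P ^+ 7 * rhoS P x = 1.
Proof.
move=> hx HP.
have N0 : (N%:R : rat) != 0 by rewrite pnatr_eq0 -lt0n expn_gt0.
have hS : rhoS P x = 1.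
  rewrite /rhoS (eq_bigr (fun _ => 1)) ?sum_one ?divff //.
  by move=> w _; rewrite testb_good.
have hL : rhoL P = 1.
  rewrite /rhoL (eq_bigr (fun _ => 1)) ?sum_one ?divff //.
  move=> v _; rewrite (eq_bigr (fun _ => 1)) ?sum_one ?divff //.
  by move=> w _; rewrite testb_good.
by rewrite hS hL expr1n mulr1.
Qed.


Lemma sum_cast k k' (h : k = k') (F : nat -> rat) :
  \sum_(v < k) F v = \sum_(v < k') F v.
Proof. by subst. Qed.

Section Bridge.
Variable m : nat.
Hypothesis hm : N = m.+1.
Variable P : int -> int.
Definition ee (g : 'I_m.+1) : int := P (val g)%:Z - b * (val g)%:Z.

Lemma testb_Lin (v w : 'I_m.+1) : testb P v w = Lin ee v w.
Proof.
rewrite /testb /Lin /ee /= hm.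
have hv := ltn_ord v; have hw := ltn_ord w.
case: (ltnP (v + w) m.+1) => h.
  rewrite modn_small // addr0; apply/eqP/eqP; rewrite PoszD => H; lia.
have hmo : ((v + w) %% m.+1 = v + w - m.+1)%N.
  by rewrite -{1}(subnK h) modnDr modn_small //; lia.
rewrite hmo; apply/eqP/eqP => H.
  have : b * (v + w - m.+1)%N%:Z = b * v + b * w - b * m.+1%:Z.
    by rewrite -!mulrDr -mulrBr; congr (_ * _); lia.
  lia.
have : b * (v + w - m.+1)%N%:Z = b * v + b * w - b * m.+1%:Z.
  by rewrite -!mulrDr -mulrBr; congr (_ * _); lia.
lia.
Qed.

Lemma rhoL_eq : rhoL P =
  (\sum_(v : 'I_m.+1) \sum_(w : 'I_m.+1) (Lin ee v w : nat))%N%:R / (N * N)%N%:R.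
Proof.
rewrite /rhoL (sum_cast hm (fun v : nat => (\sum_(w < N) (testb P v w)%:R) / N%:R)) natrM invfM mulrA; congr (_ / _).
rewrite -mulr_suml natr_sum; congr (_ / _); apply: eq_bigr => v _.
rewrite (sum_cast hm (fun w : nat => (testb P v w)%:R)) natr_sum.
by apply: eq_bigr => w _; rewrite testb_Lin.
Qed.

Lemma rhoS_eq (x : 'I_m.+1) : rhoS P x =
  (\sum_(w : 'I_m.+1) ((ee x + ee w == ee (x + w))%R : nat))%N%:R / N%:R.
Proof.
rewrite /rhoS (sum_cast hm (fun w : nat => (testb P x w)%:R)) natr_sum; congr (_ / _); apply: eq_bigr => w _.
by rewrite testb_Lin.
Qed.

End Bridge.
End Prog.

Lemma final_bound (A F B N : nat) : (0 < N)%N -> (A + F = N * N)%N -> (B <= N)%N ->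
  ((6 * F < N * N)%N -> (3 * B < N)%N) ->
  ((A%:R / (N * N)%N%:R) ^+ 7 * (B%:R / N%:R) : rat) <= 1 / 3%:R.
Proof.
move=> N0 hAF hB hsm.
have N0r : (0 : rat) < N%:R by rewrite ltr0n.
have NN0r : (0 : rat) < (N * N)%N%:R by rewrite ltr0n muln_gt0 N0.
set a : rat := A%:R / _; set s : rat := B%:R / _.
have a0 : 0 <= a by rewrite divr_ge0 ?ler0n.
have s0 : 0 <= s by rewrite divr_ge0 ?ler0n.
have a1 : a <= 1 by rewrite ler_pdivrMr // mul1r ler_nat; lia.
have s1 : s <= 1 by rewrite ler_pdivrMr // mul1r ler_nat.
case: (ltnP (6 * F) (N * N)) => h.
  have s3 : s <= 1 / 3%:R.
    have hn : (3 * B <= N)%N by have := hsm h; lia.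
    move: hn; rewrite -(ler_nat rat) natrM => hn.
    rewrite ler_pdivrMr //; lra.
  have a7 : a ^+ 7 <= 1 by apply: exprn_ile1.
  apply: le_trans s3; rewrite -[leRHS]mul1r; apply: ler_wpM2r => //.
have a56 : a <= 5%:R / 6%:R.
  have hn : (6 * A <= 5 * (N * N))%N by lia.
  move: hn; rewrite -(ler_nat rat) !natrM => hn.
  rewrite ler_pdivrMr // natrM; lra.
have : a ^+ 7 <= (5%:R / 6%:R) ^+ 7.
  by apply: lerXn2r => //; rewrite nnegrE // divr_ge0 ?ler0n.
have c : ((5%:R / 6%:R : rat) ^+ 7 <= 1 / 3%:R) by rewrite !exprS expr0; lra.
move=> h7; apply: le_trans c; apply: le_trans h7.
rewrite -[leRHS]mulr1; apply: ler_wpM2l => //; exact: exprn_ge0.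
Qed.

Theorem theorem2 :
  exists (Q K : nat), forall n : nat, (1 <= n)%N -> forall b : int,
    exists C : prog,
      is_checker n (fun x => b * x) C /\
      (num_queries C <= Q)%N /\ (comp_time n C <= K * n)%N.
Proof.
exists 24%N, 95%N => n hn b; exists (chk n b).
split; last by rewrite nq_chk ct_chk.
move=> x hx.
case: x hx => [xn|xn] hx; last by exfalso; move: hx; rewrite /=; lia.
have hxn : (xn < 2 ^ n)%N by move: hx => /andP [_]; lia.
split=> P HP.
  by rewrite chk_eq // complete //; lra.
rewrite chk_eq //.
set m := (2 ^ n).-1.
have hm : (2 ^ n)%N = m.+1 by rewrite /m prednK // expn_gt0.
have m0 : (0 < m)%N.
  have : (2 <= 2 ^ n)%N by rewrite -{1}(expn1 2) leq_pexp2l.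
  lia.
have hxo : (xn < m.+1)%N by rewrite -hm.
pose xo : 'I_m.+1 := Ordinal hxo.
rewrite (rhoL_eq b hm P) (rhoS_eq b hm P xo) /=.
set e := ee b P.
have hex : e xo != 0.
  rewrite /e /ee /=; apply/eqP => h; apply: HP; lia.
have hAF : (\sum_(v : 'I_m.+1) \sum_(w : 'I_m.+1) (Lin e v w : nat) + Fc e
     = m.+1 * m.+1)%N.
  rewrite /Fc -big_split /=.
  rewrite (eq_bigr (fun _ => m.+1)); last first.
    move=> v _; rewrite -big_split /= (eq_bigr (fun _ => 1%N)).
      by rewrite sum_nat_const card_ord muln1.
    by move=> w _; case: (Lin e v w).
  by rewrite sum_nat_const card_ord.
have hB : (\sum_(w : 'I_m.+1) ((e xo + e w == e (xo + w))%R : nat) <= m.+1)%N.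
  apply: (@leq_trans (\sum_(w : 'I_m.+1) 1%N)).
    by apply: leq_sum => w _; case: (_ == _).
  by rewrite sum_nat_const card_ord muln1.
have := final_bound (ltn0Sn m) hAF hB (fun h => selfcorr_bound m0 h hex).
move=> H; rewrite hm.
have K : forall X : rat, X <= 1 / 3%:R -> 2%:R / 3%:R <= 1 - X by move=> X; lra.
exact: K.
Qed.
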